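(* Consider the $l$-th cycle of RPF-SFISTA and assume $\mu=\mu_{l-1}\in(0,\bar\mu]$. Let $\gamma_j(x):=\phi(y_j)+2[\ell_f(y_j;\tilde x_{j-1})-f(y_j)]+\langle s_j,x-y_j\rangle+\frac{\mu}{4}\|x-y_j\|^2$. Then for every iteration index $j\ge1$ generated in this cycle, $\gamma_j(x)\le\phi(x)$ for all $x\in\mathbb R^n$.
   Context: Setup. Let $f:\mathbb R^n\to\mathbb R$ be convex and differentiable with $\|\nabla f(z')-\nabla f(z)\|\le\bar L\|z'-z\|$ for all $z,z'\in\mathbb R^n$ (some $\bar L\ge0$). Let $h:\mathbb R^n\to(-\infty,\infty]$ be proper, lower semicontinuous and convex with domain $\mathcal H$. Let $\phi:=f+h$ be $\bar\mu$-strongly convex for some $\bar\mu>0$ (the entire sum, not necessarily $f$ or $h$ individually). Write $\ell_f(u;x):=f(x)+\langle\nabla f(x),u-x\rangle$. RPF-SFISTA. Parameters $\chi\in(0,1)$, $\beta>1$; inputs $\mu_0>0$, $\bar M_0>0$, $z_0\in\mathcal H$, $\hat\epsilon>0$. The method runs in cycles $l=1,2,\dots$. At the start of cycle $l$: choose $\underline M_l\in[\max\{\bar M_{l-1}/4,\bar M_0\},\bar M_{l-1}]$ (so $\underline M_1=\bar M_0$), set $\mu:=\mu_{l-1}$, $x_0:=z_{l-1}$, $\xi_0:=y_0:=x_0$, $A_0:=0$, $\tau_0:=1$, $L_0:=\underline M_l$. Then for $j=1,2,\dots$: (i) set $L_j:=L_{j-1}$; (ii) compute $a_{j-1}=\frac{\tau_{j-1}+\sqrt{\tau_{j-1}^2+4\tau_{j-1}A_{j-1}L_j}}{2L_j}$,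 $\tilde x_{j-1}=\frac{A_{j-1}y_{j-1}+a_{j-1}x_{j-1}}{A_{j-1}+a_{j-1}}$, $y_j=\arg\min_{u}\{\ell_f(u;\tilde x_{j-1})+h(u)+\frac{L_j}{2}\|u-\tilde x_{j-1}\|^2\}$; if $f(y_j)\le\ell_f(y_j;\tilde x_{j-1})+\frac{(1-\chi)L_j}{4}\|y_j-\tilde x_{j-1}\|^2$ go to (iii), otherwise replace $L_j$ by $\beta L_j$ and repeat (ii); (iii) set $\xi_j:=y_j$ if $\phi(y_j)\le\phi(\xi_{j-1})$ and $\xi_j:=\xi_{j-1}$ otherwise; $A_j:=A_{j-1}+a_{j-1}$; $\tau_j:=\tau_{j-1}+a_{j-1}\mu/2$; $s_j:=L_j(\tilde x_{j-1}-y_j)$; $x_j:=\tau_j^{-1}[\mu a_{j-1}y_j/2+\tau_{j-1}x_{j-1}-a_{j-1}s_j]$; $v_j:=\nabla f(y_j)-\nabla f(\tilde x_{j-1})+s_j$; (iv) if $\|\xi_j-x_0\|^2<\chi A_jL_j\|y_j-\tilde x_{j-1}\|^2$, the cycle ends with a restart: set $z_l:=\xi_j$, $\bar M_l:=L_j$, $\mu_l:=\mu/2$ and start cycle $l+1$; (v) otherwise, if $\|v_j\|\le\hat\epsilon$, stop and output $(y,v,\xi,L):=(y_j,v_j,\xi_j,L_j)$; else go to iteration $j+1$. In these formulas $L_j$, $a_{j-1}$, $\tilde x_{j-1}$, $y_j$ denote the final (accepted) values after the line search in (ii). *)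

(* Defs.v *)
From HB Require Import structures.
From mathcomp Require Import all_boot all_order all_algebra.
From mathcomp Require Import all_classical all_reals all_analysis.
Set Implicit Arguments. Unset Strict Implicit. Unset Printing Implicit Defensive.
Import Order.TTheory GRing.Theory Num.Theory.
Import numFieldNormedType.Exports.
Local Open Scope ring_scope.

Section Defs.
Context {R : realType} {n : nat}.
Notation vec := 'rV[R]_n.

Definition dotv (u w : vec) : R := \sum_(i < n) u 0 i * w 0 i.
Definition sqnorm (u : vec) : R := dotv u u.
Definition enorm (u : vec) : R := Num.sqrt (sqnorm u).

Definition lin_f (f : vec -> R) (gf : vec -> vec) (u x : vec) : R :=
  f x + dotv (gf x) (u - x).

Definition convex_fun (f : vec -> R) : Prop :=
  forall (x y : vec) (t : R), 0 <= t <= 1 ->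
    f (t *: x + (1 - t) *: y) <= t * f x + (1 - t) * f y.

Definition convex_efun (h : vec -> \bar R) : Prop :=
  forall (x y : vec) (t : R), 0 < t < 1 ->
    (h (t *: x + (1 - t) *: y)%R <= t%:E * h x + (1 - t)%:E * h y)%E.

Definition proper_efun (h : vec -> \bar R) : Prop :=
  (forall x, (-oo < h x)%E) /\ exists x, (h x < +oo)%E.

Definition strongly_convex_efun (mu : R) (g : vec -> \bar R) : Prop :=
  forall (x y : vec) (t : R), 0 < t < 1 ->
    (g (t *: x + (1 - t) *: y)%R <= t%:E * g x + (1 - t)%:E * g y
        - (mu / 2 * t * (1 - t) * sqnorm (x - y)%R)%:E)%E.

Definition phi_fun (f : vec -> R) (h : vec -> \bar R) (x : vec) : \bar R :=
  ((f x)%:E + h x)%E.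

(* objective of the prox subproblem in step (ii) *)
Definition sub_obj (f : vec -> R) (gf : vec -> vec) (h : vec -> \bar R)
    (L : R) (xt u : vec) : \bar R :=
  ((lin_f f gf u xt)%:E + h u + (L / 2 * sqnorm (u - xt)%R)%:E)%E.

Definition is_argmin (F : vec -> \bar R) (y : vec) : Prop :=
  forall u, (F y <= F u)%E.

(* a_{j-1} as a function of tau_{j-1}, A_{j-1}, L_j *)
Definition a_step (tau A L : R) : R :=
  (tau + Num.sqrt (tau ^+ 2 + 4 * tau * A * L)) / (2 * L).

Definition xt_step (A a : R) (yprev xprev : vec) : vec :=
  (A + a)^-1 *: (A *: yprev + a *: xprev).

Definition ls_accept (f : vec -> R) (gf : vec -> vec) (chi L : R) (xt y : vec) : Prop :=
  f y <= lin_f f gf y xt + (1 - chi) * L / 4 * sqnorm (y - xt).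

(* One cycle of RPF-SFISTA, iterations 1..J all generated in this cycle
   (iterations j < J neither restart nor stop).  Data of the cycle:
   mu = mu_{l-1}, x0 = z_{l-1}, Mbar0, Mprev = Mbar_{l-1}, Ml = underline M_l. *)
Definition rpf_cycle (f : vec -> R) (gf : vec -> vec) (h : vec -> \bar R)
  (chi beta mu epsh Mbar0 Mprev Ml : R) (x0 : vec) (J : nat)
  (L a A tau : nat -> R) (xt y x xi s v : nat -> vec) : Prop :=
  [/\ Num.max (Mprev / 4) Mbar0 <= Ml <= Mprev,
      [/\ [/\ x 0%N = x0, xi 0%N = x0 & y 0%N = x0], A 0%N = 0, tau 0%N = 1 & L 0%N = Ml],
      (forall j : nat, (1 <= j <= J)%N ->
        (* step (ii): line search L_j = beta^k L_{j-1}, k minimal accepted *)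
        (exists k : nat,
          [/\ L j = beta ^+ k * L j.-1,
              (forall k' : nat, (k' < k)%N ->
                 let L' := beta ^+ k' * L j.-1 in
                 let a' := a_step (tau j.-1) (A j.-1) L' in
                 let xt' := xt_step (A j.-1) a' (y j.-1) (x j.-1) in
                 forall y' : vec, is_argmin (sub_obj f gf h L' xt') y' ->
                   ~ ls_accept f gf chi L' xt' y'),
              a j.-1 = a_step (tau j.-1) (A j.-1) (L j) /\
              xt j.-1 = xt_step (A j.-1) (a j.-1) (y j.-1) (x j.-1),
              is_argmin (sub_obj f gf h (L j) (xt j.-1)) (y j) &
              ls_accept f gf chi (L j) (xt j.-1) (y j)]) /\
        [/\ xi j = (if (phi_fun f h (y j) <= phi_fun f h (xi j.-1))%E
                    then y j else xi j.-1),
            A j = A j.-1 + a j.-1 /\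
            tau j = tau j.-1 + a j.-1 * mu / 2,
            s j = L j *: (xt j.-1 - y j),
            x j = (tau j)^-1 *: (mu * a j.-1 / 2 *: y j + tau j.-1 *: x j.-1
                                  - a j.-1 *: s j) &
            v j = gf (y j) - gf (xt j.-1) + s j]) &
      (* steps (iv),(v): iterations j < J neither restart nor stop *)
      (forall j : nat, (1 <= j < J)%N ->
        ~ (sqnorm (xi j - x0) < chi * A j * L j * sqnorm (y j - xt j.-1))
        /\ ~ (enorm (v j) <= epsh))].

Definition gamma_fun (f : vec -> R) (h : vec -> \bar R) (gf : vec -> vec) (mu : R)
  (xtj1 yj sj : vec) (z : vec) : \bar R :=
  (phi_fun f h yj +
    (2 * (lin_f f gf yj xtj1 - f yj) + dotv sj (z - yj)
      + mu / 4 * sqnorm (z - yj))%:E)%E.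

End Defs.

(* Main.v *)
Require Import Defs.
From HB Require Import structures.
From mathcomp Require Import all_boot all_order all_algebra.
From mathcomp Require Import all_classical all_reals all_analysis.
From mathcomp Require Import ring lra.
Import Order.TTheory GRing.Theory Num.Theory.
Import numFieldNormedType.Exports.
Local Open Scope ring_scope.

Section H.
Context {R : realType} {n : nat}.
Implicit Types u w c : 'rV[R]_n.

Lemma dotvDl u w c : dotv (u + w) c = dotv u c + dotv w c.
Proof. rewrite /dotv -big_split /=; apply: eq_bigr => i _; rewrite mxE mulrDl //. Qed.
Lemma dotvZl (k : R) u c : dotv (k *: u) c = k * dotv u c.
Proof. rewrite /dotv mulr_sumr; apply: eq_bigr => i _; rewrite mxE mulrA //. Qed.
Lemma dotvC u w : dotv u w = dotv w u.
Proof. by rewrite /dotv; apply: eq_bigr => i _; rewrite mulrC. Qed.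
Lemma dotvDr u w c : dotv c (u + w) = dotv c u + dotv c w.
Proof. by rewrite dotvC dotvDl !(dotvC c). Qed.
Lemma dotvZr (k : R) u c : dotv c (k *: u) = k * dotv c u.
Proof. by rewrite dotvC dotvZl dotvC. Qed.
Lemma dotvNl u c : dotv (- u) c = - dotv u c.
Proof. by rewrite -scaleN1r dotvZl mulN1r. Qed.
Lemma dotvNr u c : dotv c (- u) = - dotv c u.
Proof. by rewrite dotvC dotvNl dotvC. Qed.
Lemma dotvBl u w c : dotv (u - w) c = dotv u c - dotv w c.
Proof. by rewrite dotvDl dotvNl. Qed.
Lemma dotvBr u w c : dotv c (u - w) = dotv c u - dotv c w.
Proof. by rewrite dotvDr dotvNr. Qed.
Lemma sqnorm_ge0 u : 0 <= sqnorm u.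
Proof. by rewrite /sqnorm /dotv; apply: sumr_ge0 => i _; rewrite -expr2 sqr_ge0. Qed.
End H.

Lemma lim_small (R : realType) (a b d : R) :
  (forall t : R, 0 < t < 1 -> a <= b + t * d) -> a <= b.
Proof.
move=> H; rewrite leNgt; apply/negP => hab.
pose t := (a - b) / (2 * (`|d| + (a - b))).
have hp : 0 < `|d| + (a - b) by rewrite ltr_pwDr // subr_gt0.
have t0 : 0 < t by apply: divr_gt0; [rewrite subr_gt0 | rewrite mulr_gt0].
have tE : t * (2 * (`|d| + (a - b))) = a - b by rewrite /t mulfVK // gt_eqF // mulr_gt0.
have t1 : t < 1.
  have : t * (2 * (`|d| + (a - b))) < 1 * (2 * (`|d| + (a - b))).
    rewrite tE mul1r; have := normr_ge0 d; lra.
  by rewrite ltr_pM2r // mulr_gt0.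
have := H t (ltac:(apply/andP; split => //)).
have : t * d <= t * `|d| by rewrite ler_pM2l // ler_norm.
have : t * `|d| < (a - b) / 2.
  have : t * (2 * `|d|) < t * (2 * (`|d| + (a - b))) by rewrite ltr_pM2l //; lra.
  rewrite tE; nra.
lra.
Qed.

Lemma sqnormD (R : realType) (n : nat) (t1 t2 : R) (A B : 'rV[R]_n) :
  sqnorm (t1 *: A + t2 *: B) =
  t1 ^+ 2 * sqnorm A + 2 * t1 * t2 * dotv A B + t2 ^+ 2 * sqnorm B.
Proof.
rewrite /sqnorm !(dotvDl, dotvDr, dotvZl, dotvZr) (dotvC B A); ring.
Qed.

Lemma keyK (R : realType) (n : nat) (f : 'rV[R]_n -> R) (gf : 'rV[R]_n -> 'rV[R]_n)
  (h : 'rV[R]_n -> \bar R) (Hhprop : proper_efun h) (Hhconv : convex_efun h)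
  (L : R) (xt y z : 'rV[R]_n) (hy hz : R)
  (Harg : is_argmin (sub_obj f gf h L xt) y)
  (Hy : h y = hy%:E) (Hz : h z = hz%:E) :
  lin_f f gf y xt + hy + dotv (L *: (xt - y)) (z - y) <= lin_f f gf z xt + hz.
Proof.
set A := z - xt; set B := y - xt.
have -> : z - y = A - B by apply/rowP => i; rewrite !mxE; ring.
have -> : xt - y = - B by apply/rowP => i; rewrite !mxE; ring.
rewrite dotvZl dotvNl dotvBr.
apply: (@lim_small _ _ _ (L / 2 * (sqnorm A - 2 * dotv A B + sqnorm B))) => t /andP [t0 t1].
set u := t *: z + (1 - t) *: y.
have hu_le := Hhconv z y t (ltac:(apply/andP; split => //)).
rewrite -/u Hy Hz -!EFinM -EFinD in hu_le.
case Hu: (h u) hu_le => [hu| |] //; last first.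
  by have := Hhprop.1 u; rewrite Hu.
rewrite lee_fin => hu_le.
have := Harg u; rewrite /sub_obj Hy Hu -!EFinD lee_fin.
have -> : u - xt = t *: A + (1 - t) *: B by apply/rowP => i; rewrite !mxE; ring.
rewrite sqnormD /lin_f.
have -> : u - xt = t *: A + (1 - t) *: B by apply/rowP => i; rewrite !mxE; ring.
rewrite -/B -/A -/(sqnorm B) (dotvC B A) => H.
rewrite [dotv _ (t *: A + _)]dotvDr (dotvZr t A) (dotvZr (1 - t) B) in H.
set g0 := dotv (gf xt) A in H *; set g1 := dotv (gf xt) B in H *.
set qa := sqnorm A in H *; set qb := sqnorm B in H *; set ab := dotv A B in H *.
rewrite -subr_ge0 -(pmulr_rge0 _ t0).
have -> : t * (f xt + g0 + hz + t * (L / 2 * (qa - 2 * ab + qb)) -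
   (f xt + g1 + hy + L * - (ab - qb))) =
  (f xt + (t * g0 + (1 - t) * g1) + hu +
     L / 2 * ((t ^+ 2 * qa + 2 * t * (1 - t) * ab + (1 - t) ^+ 2 * qb)))
  - (f xt + g1 + hy + L / 2 * qb) + (t * hz + (1 - t) * hy - hu).
  rewrite /g0 /g1 /qa /qb /ab; move: (f xt) (dotv (gf xt) A) (dotv (gf xt) B) (sqnorm A) (sqnorm B) (dotv A B) => ? ? ? ? ? ?. clear -t L. by field.
lra.
Qed.
Lemma grad_ineq (R : realType) (n : nat) (f : 'rV[R]_n -> R) (gf : 'rV[R]_n -> 'rV[R]_n)
  (Hfconv : convex_fun f) (Hfdiff : forall z, differentiable f z)
  (Hgrad : forall z w, 'd f z w = dotv (gf z) w) (a z : 'rV[R]_n) :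
  lin_f f gf z a <= f z.
Proof.
rewrite /lin_f -Hgrad -deriveE //.
set v := z - a.
have := @diff_derivable _ _ _ f a v (Hfdiff a).
rewrite /derivable => /cvg_ex [l Hl].
have -> : 'D_v f a = l by rewrite /derive; apply: cvg_lim.
rewrite -lerBrDl.
rewrite leNgt; apply/negP => Hlt.
have := cvgr_gt _ Hl _ Hlt.
move=> [e /= e0 He].
pose t := Num.min (e / 2) (1 / 2).
have t0 : 0 < t by rewrite lt_min; apply/andP; split; [exact: divr_gt0 | ].
have t1 : t < 1 by rewrite gt_min; apply/orP; right; lra.
have te : t < e by rewrite gt_min; apply/orP; left; lra.
have := He t.
have -> : t *: v + a = t *: z + (1 - t) *: a.
  rewrite /v scalerBr scalerBl scale1r.
  by rewrite addrCA addrC.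
have Hc := Hfconv z a t (ltac:(apply/andP; split; lra)).
have Hb : ball_ [eta Num.Def.normr] (0:R) e t.
  by rewrite /ball_ /= sub0r normrN gtr0_norm.
move=> /(_ Hb (lt0r_neq0 t0)).
have : t^-1 *: (f (t *: z + (1 - t) *: a) - f a) <= f z - f a.
  rewrite [_ *: _]/(_ * _) ler_pdivrMl //; lra.
lra.
Qed. 

Theorem lemmaA5 (R : realType) (n : nat)
  (f : 'rV[R]_n -> R) (gf : 'rV[R]_n -> 'rV[R]_n) (h : 'rV[R]_n -> \bar R)
  (Lbar mubar : R)
  (* f convex, differentiable with gradient gf, gf is Lbar-Lipschitz *)
  (Hfconv : convex_fun f)
  (Hfdiff : forall z, differentiable f z)
  (Hgrad : forall z w, 'd f z w = dotv (gf z) w)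
  (HLbar : 0 <= Lbar)
  (Hlip : forall z z', enorm (gf z' - gf z) <= Lbar * enorm (z' - z))
  (* h proper, lsc, convex *)
  (Hhprop : proper_efun h) (Hhlsc : lower_semicontinuous h) (Hhconv : convex_efun h)
  (* phi = f + h is mubar-strongly convex *)
  (Hmubar : 0 < mubar) (Hphi : strongly_convex_efun mubar (phi_fun f h))
  (* algorithm parameters and cycle inputs *)
  (chi beta mu epsh Mbar0 Mprev Ml : R) (x0 : 'rV[R]_n)
  (Hchi : 0 < chi < 1) (Hbeta : 1 < beta) (Heps : 0 < epsh) (HM0 : 0 < Mbar0)
  (Hx0 : (h x0 < +oo)%E)
  (Hmu : 0 < mu <= mubar)
  (J : nat) (L a A tau : nat -> R) (xt y x xi s v : nat -> 'rV[R]_n)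
  (Hcyc : rpf_cycle f gf h chi beta mu epsh Mbar0 Mprev Ml x0 J L a A tau xt y x xi s v) :
  forall j : nat, (1 <= j <= J)%N ->
    forall z : 'rV[R]_n, (gamma_fun f h gf mu (xt j.-1) (y j) (s j) z <= phi_fun f h z)%E.
Proof.
move=> j Hj z.
case: Hcyc => _ _ Hstep _.
have [[k [_ _ _ Harg _]] [_ _ Hs _ _]] := Hstep j Hj.
set yy := y j in Harg Hs *; set xtt := xt j.-1 in Harg Hs *; set Lj := L j in Harg Hs *.
case Hx0v: (h x0) Hx0 => [hx0| |] // _; last by have := Hhprop.1 x0; rewrite Hx0v.
case Hyv: (h yy) => [hy| |]; last by have := Hhprop.1 yy; rewrite Hyv.
  2: by have := Harg x0; rewrite /sub_obj Hyv Hx0v.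
case Hzv: (h z) => [hz| |]; last by have := Hhprop.1 z; rewrite Hzv.
  2: by rewrite /phi_fun Hzv /= leey.
set w := 2^-1 *: z + (1 - 2^-1) *: yy.
have Hsc := Hphi z yy (2^-1) (ltac:(apply/andP; split; lra)).
rewrite -/w /phi_fun Hzv Hyv -!EFinD in Hsc.
case Hwv: (h w) Hsc => [hw| |]; last by have := Hhprop.1 w; rewrite Hwv.
  2: by [].
rewrite -EFinD lee_fin => Hsc.
have HK := @keyK _ _ f gf h Hhprop Hhconv _ _ _ _ _ _ Harg Hyv Hwv.
have Hg := @grad_ineq _ _ f gf Hfconv Hfdiff Hgrad xtt w.
have Ew : w - yy = 2^-1 *: (z - yy) by apply/rowP => i; rewrite !mxE; field.
rewrite Ew dotvZr in HK.
have q0 := sqnorm_ge0 (z - yy).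
have Hq : mu / 4 * sqnorm (z - yy) <= 2 * (mubar / 2 / 2 * (1 - 2^-1)) * sqnorm (z - yy).
  apply: ler_wpM2r => //; lra.
rewrite /gamma_fun /phi_fun Hs Hyv Hzv -!EFinD lee_fin.
lra.
Qed.
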